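(* Let $(G,\cdot)$ be a two-step nilpotent group, $n$ a nonzero integer, and define $a\circ b=a\cdot a^{-n}ba^{n}$ for $a,b\in G$. Then $(G,\cdot,\circ)$ is a $\lambda$-homomorphic skew left brace; that is, the map $\lambda\colon(G,\cdot)\to\operatorname{Aut}(G,\cdot)$, $\lambda_a(b)=a^{-1}\cdot(a\circ b)=a^{-n}ba^{n}$, is a group homomorphism.
   Context: A two-step nilpotent group is a group of nilpotency class at most $2$, i.e. all commutators $[a,b]=a^{-1}b^{-1}ab$ are central. A skew left brace is a triple $(G,\cdot,\circ)$ where $(G,\cdot)$ and $(G,\circ)$ are groups on the same set with $a\circ(b\cdot c)=(a\circ b)\cdot a^{-1}\cdot(a\circ c)$ for all $a,b,c$. Its $\lambda$-map is $\lambda_a(b)=a^{-1}\cdot(a\circ b)$, and it is $\lambda$-homomorphic if $\lambda\colon(G,\cdot)\to\operatorname{Aut}(G,\cdot)$ is a group homomorphism. *)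

(* Defs.v *)
From Stdlib Require Import ZArith.

Section GroupDefs.
Context {G : Type}.

Definition is_group (mul : G -> G -> G) (one : G) (inv : G -> G) : Prop :=
  (forall a b c, mul a (mul b c) = mul (mul a b) c) /\
  (forall a, mul one a = a) /\ (forall a, mul a one = a) /\
  (forall a, mul (inv a) a = one) /\ (forall a, mul a (inv a) = one).

Definition commutator (mul : G -> G -> G) (inv : G -> G) (a b : G) : G :=
  mul (mul (mul (inv a) (inv b)) a) b.

Definition two_step_nilpotent (mul : G -> G -> G) (inv : G -> G) : Prop :=
  forall a b c, mul (commutator mul inv a b) c = mul c (commutator mul inv a b).

Fixpoint npow (mul : G -> G -> G) (one : G) (a : G) (k : nat) : G :=
  match k with
  | O => one
  | S k' => mul a (npow mul one a k')
  end.

Definition zpow (mul : G -> G -> G) (one : G) (inv : G -> G) (a : G) (z : Z) : G :=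
  match z with
  | Z0 => one
  | Zpos p => npow mul one a (Pos.to_nat p)
  | Zneg p => inv (npow mul one a (Pos.to_nat p))
  end.

Definition is_skew_left_brace (mul : G -> G -> G) (one : G) (inv : G -> G)
    (circ : G -> G -> G) : Prop :=
  is_group mul one inv /\
  (exists (one' : G) (inv' : G -> G), is_group circ one' inv') /\
  (forall a b c, circ a (mul b c) = mul (mul (circ a b) (inv a)) (circ a c)).

Definition brace_lambda (mul : G -> G -> G) (inv : G -> G) (circ : G -> G -> G)
    (a b : G) : G :=
  mul (inv a) (circ a b).

Definition is_automorphism (mul : G -> G -> G) (f : G -> G) : Prop :=
  (forall x y, f (mul x y) = mul (f x) (f y)) /\
  (forall x y, f x = f y -> x = y) /\ (forall y, exists x, f x = y).

Definition lambda_homomorphic (mul : G -> G -> G) (inv : G -> G)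
    (circ : G -> G -> G) : Prop :=
  (forall a, is_automorphism mul (brace_lambda mul inv circ a)) /\
  (forall a b x, brace_lambda mul inv circ (mul a b) x =
                 brace_lambda mul inv circ a (brace_lambda mul inv circ b x)).

End GroupDefs.

(* Main.v *)
Require Import Defs.
From Stdlib Require Import ZArith Lia.

Set Default Proof Using "All".
Section Grp.
Variable G : Type.
Variable mul : G -> G -> G.
Variable one : G.
Variable inv : G -> G.
Hypothesis mA : forall a b c, mul a (mul b c) = mul (mul a b) c.
Hypothesis m1l : forall a, mul one a = a.
Hypothesis m1r : forall a, mul a one = a.
Hypothesis mVl : forall a, mul (inv a) a = one.
Hypothesis mVr : forall a, mul a (inv a) = one.
Hypothesis Hnil : two_step_nilpotent mul inv.

Local Infix "*" := mul.
Definition central z := forall x, z * x = x * z.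
Definition cm := commutator mul inv.

Lemma mKl a b : inv a * (a * b) = b.
Proof. rewrite mA, mVl, m1l; reflexivity. Qed.
Lemma mKr a b : a * (inv a * b) = b.
Proof. rewrite mA, mVr, m1l; reflexivity. Qed.
Lemma inv_uniq a b : a * b = one -> inv a = b.
Proof. intro H. rewrite <- (m1r (inv a)), <- H, mKl. reflexivity. Qed.
Lemma invK a : inv (inv a) = a.
Proof. apply inv_uniq. apply mVl. Qed.
Lemma invM a b : inv (a * b) = inv b * inv a.
Proof. apply inv_uniq. rewrite mA, <- (mA a b), mVr, m1r, mVr. reflexivity. Qed.
Lemma inv1 : inv one = one.
Proof. apply inv_uniq. apply m1l. Qed.

Lemma cm_central a b : central (cm a b).
Proof. intro x. apply Hnil. Qed.

Lemma central_mul u v : central u -> central v -> central (u * v).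
Proof. intros Hu Hv x. rewrite <- mA, Hv, mA, Hu, mA. reflexivity. Qed.
Lemma central_inv u : central u -> central (inv u).
Proof. intros Hu x.
  rewrite <- (invK x) at 1. rewrite <- invM, <- Hu, invM, invK. reflexivity. Qed.
Lemma central_one : central one.
Proof. intro x. rewrite m1l, m1r. reflexivity. Qed.

Definition zp a n := zpow mul one inv a n.

Lemma central_npow u k : central u -> central (npow mul one u k).
Proof. intro Hu. induction k; simpl. apply central_one. apply central_mul; auto. Qed.
Lemma central_zp u n : central u -> central (zp u n).
Proof. intro Hu. destruct n; simpl. apply central_one. apply central_npow; auto.
  apply central_inv, central_npow; auto. Qed.

Lemma hom_npow (h : G -> G) : (forall x y, h (x * y) = h x * h y) -> h one = one ->
  forall a k, h (npow mul one a k) = npow mul one (h a) k.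
Proof. intros Hh H1 a k. induction k; simpl. auto. rewrite Hh, IHk. reflexivity. Qed.

Lemma npow_central_mul u v k : central u -> central v ->
  npow mul one (u * v) k = npow mul one u k * npow mul one v k.
Proof. intros Hu Hv. induction k; simpl. rewrite m1l; auto.
  rewrite IHk. rewrite <- !mA. f_equal. rewrite !mA. f_equal.
  apply Hv. Qed.

Lemma zp_central_mul u v n : central u -> central v ->
  zp (u * v) n = zp u n * zp v n.
Proof. intros Hu Hv. destruct n; simpl. rewrite m1l; auto.
  apply npow_central_mul; auto.
  rewrite npow_central_mul, invM by auto. apply central_inv, central_npow; auto. Qed.

Lemma zp_one n : zp one n = one.
Proof. assert (forall k, npow mul one one k = one).
  { induction k; simpl; auto. rewrite IHk; auto. }
  destruct n; simpl; rewrite ?H, ?inv1; auto. Qed.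

Lemma zp_neg a n : zp a (- n) = inv (zp a n).
Proof. destruct n; simpl. rewrite inv1; auto. auto. rewrite invK; auto. Qed.

Lemma zp_hom (h : G -> G) : (forall x y, h (x * y) = h x * h y) ->
  forall a n, h (zp a n) = zp (h a) n.
Proof. intros Hh.
  assert (H1 : h one = one).
  { assert (E : h one * h one = h one * one) by (rewrite <- Hh, !m1r; auto).
    rewrite <- (mKl (h one) (h one)), E, mKl. auto. }
  assert (Hi : forall x, h (inv x) = inv (h x)).
  { intro x. symmetry. apply inv_uniq. rewrite <- Hh, mVr. auto. }
  intros a n. destruct n; simpl; auto; rewrite ?Hi; rewrite hom_npow; auto. Qed.

Lemma cm_mulr x g h : cm x (g * h) = cm x g * cm x h.
Proof.
  unfold cm, commutator.
  rewrite invM.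
  (* cm x g * (x^-1 h^-1 x h) ; cm x g central *)
  set (c := inv x * inv g * x * g).
  assert (Hc : central c) by (apply (cm_central x g)).
  transitivity (inv x * inv h * x * (inv x * inv g * x * g) * h).
  { rewrite <- !mA. f_equal. f_equal. rewrite (mKr x). reflexivity. }
  fold c. rewrite (Hc (inv x * inv h * x * h)). rewrite <- (mA _ c h), (Hc h), !mA. reflexivity.
Qed.

Lemma cm_central_l x z a : central z -> cm (x * z) a = cm x a.
Proof. intro Hz. unfold cm, commutator. rewrite invM.
  replace (inv z * inv x * inv a * (x * z) * a)
    with (inv z * (inv x * inv a * x * a) * z)
    by (rewrite !mA; rewrite <- (mA _ z a), (Hz a), !mA; reflexivity).
  rewrite <- Hz, mKr. reflexivity. Qed.

Lemma cm_central_r x z : central z -> cm x z = one.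
Proof. intro Hz. unfold cm, commutator. rewrite <- (mA _ x z), <- Hz, mA.
  rewrite <- (mA _ (inv z) z), mVl, m1r, mVl. reflexivity. Qed.

Lemma cm_x1 x : cm x one = one.
Proof. apply cm_central_r, central_one. Qed.
Lemma cm_1x x : cm one x = one.
Proof. unfold cm, commutator. rewrite inv1, m1l, m1r, mVl. reflexivity. Qed.

Variable n : Z.
Definition L a x := x * zp (cm x a) n.

Lemma L_conj a x : L a x = inv (zp a n) * x * zp a n.
Proof. unfold L.
  assert (E : zp (cm x a) n = cm x (zp a n)).
  { symmetry. apply (zp_hom (cm x)). intros; apply cm_mulr. }
  rewrite E. unfold cm, commutator. rewrite !mA, mVr, m1l. reflexivity. Qed.

Lemma L_mul a b x : L (a * b) x = L a (L b x).
Proof. unfold L.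
  rewrite cm_central_l by (apply central_zp, cm_central).
  rewrite cm_mulr, zp_central_mul by apply cm_central.
  unfold L. rewrite <- !mA. f_equal. apply central_zp, cm_central. Qed.

Lemma L_central z x : central z -> L z x = x.
Proof. intro Hz. unfold L. rewrite cm_central_r, zp_one, m1r; auto. Qed.

Lemma L_hom a x y : L a (x * y) = L a x * L a y.
Proof. rewrite !L_conj. rewrite <- !mA. f_equal. f_equal. rewrite !mA, mVr, m1l.
  reflexivity. Qed.

Lemma L_one a : L a one = one.
Proof. unfold L. rewrite cm_1x, zp_one, m1r. auto. Qed.
Lemma L_1 x : L one x = x.
Proof. apply L_central, central_one. Qed.

Lemma L_L a b x : L (L a b) x = L b x.
Proof. change (L a b) with (b * zp (cm b a) n). rewrite L_mul, (L_central (zp (cm b a) n)); auto. apply central_zp, cm_central. Qed.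

Lemma cm_inv a : cm a (inv a) = one.
Proof. unfold cm, commutator. rewrite invK, mVl, m1l, mVr. auto. Qed.
Lemma cm_inv' a : cm (inv a) a = one.
Proof. unfold cm, commutator. rewrite invK, mVr, m1l, mVl. auto. Qed.

Lemma conj_inj p x y : inv p * x * p = inv p * y * p -> x = y.
Proof. intro E.
  assert (E2 : p * (inv p * x * p) * inv p = p * (inv p * y * p) * inv p) by (rewrite E; auto).
  rewrite !mA, mVr, !m1l, <- !mA, mVr, !m1r in E2. exact E2. Qed.

Lemma conj_surj p y : inv p * (p * y * inv p) * p = y.
Proof. rewrite !mA, mVl, m1l, <- !mA, mVl, m1r. auto. Qed.

End Grp.

Theorem proposition5p5 (G : Type) (mul : G -> G -> G) (one : G) (inv : G -> G)
  (Hgrp : is_group mul one inv) (Hnil : two_step_nilpotent mul inv)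
  (n : Z) (Hn : n <> 0%Z) :
  let circ := fun a b : G =>
    mul a (mul (mul (zpow mul one inv a (- n)) b) (zpow mul one inv a n)) in
  is_skew_left_brace mul one inv circ /\ lambda_homomorphic mul inv circ.
Proof.
  destruct Hgrp as [mA [m1l [m1r [mVl mVr]]]].
  intro circ.
  set (L' := L G mul one inv n).
  assert (Ec : forall a b, circ a b = mul a (L' a b)).
  { intros a b. unfold circ, L'. rewrite (L_conj G mul one inv mA m1l m1r mVl mVr Hnil).
    unfold zp. rewrite (zp_neg G mul one inv mA m1l m1r mVl mVr Hnil). reflexivity. }
  pose proof (L_mul G mul one inv mA m1l m1r mVl mVr Hnil n) as HLm.
  pose proof (L_L G mul one inv mA m1l m1r mVl mVr Hnil n) as HLL.
  pose proof (L_hom G mul one inv mA m1l m1r mVl mVr Hnil n) as HLh.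
  pose proof (L_conj G mul one inv mA m1l m1r mVl mVr Hnil n) as HLc.
  fold L' in HLm, HLL, HLh, HLc.
  assert (Elam : forall a b, brace_lambda mul inv circ a b = L' a b).
  { intros a b. unfold brace_lambda. rewrite Ec, mA, mVl, m1l. auto. }
  split; [split; [|split]|split].
  - repeat split; auto.
  - exists one, inv. repeat split.
    + intros a b c. rewrite !Ec, HLh, HLm, HLL, !mA. reflexivity.
    + intro a. rewrite Ec, m1l. unfold L'. apply L_1; auto.
    + intro a. rewrite Ec. unfold L', L.
      rewrite (cm_1x G mul one inv mA m1l m1r mVl mVr Hnil), (zp_one G mul one inv mA m1l m1r mVl mVr Hnil), !m1r. auto.
    + intro a. rewrite Ec. unfold L', L.
      rewrite (cm_inv G mul one inv mA m1l m1r mVl mVr Hnil n), (zp_one G mul one inv mA m1l m1r mVl mVr Hnil), !m1r. auto.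
    + intro a. rewrite Ec. unfold L', L.
      rewrite (cm_inv' G mul one inv mA m1l m1r mVl mVr Hnil n), (zp_one G mul one inv mA m1l m1r mVl mVr Hnil), !m1r. auto.
  - intros a b c. rewrite !Ec, HLh. rewrite <- !mA. f_equal. f_equal.
    rewrite (mKl G mul one inv mA m1l m1r mVl mVr Hnil). auto.
  - intro a. repeat split.
    + intros x y. rewrite !Elam. auto.
    + intros x y. rewrite !Elam, !HLc. intro E.
      exact (conj_inj G mul one inv mA m1l m1r mVl mVr Hnil n _ _ _ E).
    + intro y. exists (mul (mul (zpow mul one inv a n) y) (inv (zpow mul one inv a n))).
      rewrite Elam, HLc. apply (conj_surj G mul one inv mA m1l m1r mVl mVr Hnil n).
  - intros a b x. rewrite !Elam. auto.
Qed.
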